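(* Let $k$ be any field and $d$ a positive integer. For every $u\in k_0\langle X\rangle$, $[S_d(x_1,\ldots,x_d),u]\in R_1^{(d)}$.
   Context: $X=\{x_1,x_2,\ldots\}$ is a countably infinite set and $k_0\langle X\rangle$ is the free associative $k$-algebra (without identity) on $X$. A $T$-space is a $k$-linear subspace closed under every algebra endomorphism of $k_0\langle X\rangle$; the $T$-space generated by a subset is the smallest $T$-space containing it. $S_d(v_1,\ldots,v_d)=\sum_{\sigma\in\Sigma_d}\prod_{i=1}^d v_{\sigma(i)}$, and $R_1^{(d)}$ is the $T$-space generated by $S_d(x_1,\ldots,x_d)$. $[a,b]=ab-ba$. *)

(* Defs.v *)
From HB Require Import structures.
From mathcomp Require Import all_boot all_order all_algebra all_fingroup.
From mathcomp Require Import monalg.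
Set Implicit Arguments. Unset Strict Implicit. Unset Printing Implicit Defensive.
Import GRing.Theory.
Local Open Scope ring_scope.

(* k<X> : the free associative unital k-algebra on X = {x_i | i : nat},
   realised as the monoid algebra of the free monoid {fmonom nat}
   (words over nat, concatenation). *)
Definition freeAlg (k : fieldType) := {malg k[{fmonom nat}]}.

Definition xvar (k : fieldType) (i : nat) : freeAlg k := << @fmu nat i >>.

(* k_0<X> : the non-unital free algebra on X, i.e. the span of the nonempty
   words = the elements of k<X> whose coefficient at the empty word is 0. *)
Definition emptyword : {fmonom nat} := FMonom [::].
Definition in_free0 (k : fieldType) (p : freeAlg k) : Prop := p@_emptyword = 0.

(* Algebra endomorphisms of k_0<X> (k-linear, multiplicative maps
   k_0<X> -> k_0<X>), given as maps on k<X> whose behaviour is only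
   constrained on k_0<X>. *)
Definition is_endo0 (k : fieldType) (phi : freeAlg k -> freeAlg k) : Prop :=
  [/\ (forall p, in_free0 p -> in_free0 (phi p)),
      (forall (a : k) p q, in_free0 p -> in_free0 q ->
          phi (a *: p + q) = a *: phi p + phi q) &
      (forall p q, in_free0 p -> in_free0 q -> phi (p * q) = phi p * phi q)].

Definition is_Tspace (k : fieldType) (V : freeAlg k -> Prop) : Prop :=
  [/\ (forall p, V p -> in_free0 p),
      V 0,
      (forall (a : k) p q, V p -> V q -> V (a *: p + q)) &
      (forall phi, is_endo0 phi -> forall p, V p -> V (phi p))].

Definition Tspace_gen (k : fieldType) (S : freeAlg k -> Prop) (v : freeAlg k) : Prop :=
  forall V, is_Tspace V -> (forall p, S p -> V p) -> V v.

(* S_d(v_1,...,v_d) = sum_{sigma in Sigma_d} prod_{i=1}^d v_{sigma(i)}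
   (ordered product, indices shifted to 'I_d = {0,...,d-1}). *)
Definition Spoly (k : fieldType) (d : nat) (v : 'I_d -> freeAlg k) : freeAlg k :=
  \sum_(s : 'S_d) \prod_(i < d) v (s i).

Definition Sd (k : fieldType) (d : nat) : freeAlg k :=
  Spoly (fun i : 'I_d => xvar k i.+1).

Definition R1 (k : fieldType) (d : nat) : freeAlg k -> Prop :=
  Tspace_gen (fun p => p = Sd k d).

Definition comm (k : fieldType) (a b : freeAlg k) : freeAlg k := a * b - b * a.

(* Main.v *)
Require Import Defs.
From HB Require Import structures.
From mathcomp Require Import all_boot all_order all_algebra all_fingroup.
From mathcomp Require Import finmap monalg.
Set Implicit Arguments. Unset Strict Implicit. Unset Printing Implicit Defensive.
Import GRing.Theory.
Local Open Scope ring_scope.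

Lemma malgC_comm (k : fieldType) (c : k) (g : freeAlg k) : c%:MP * g = g * c%:MP.
Proof.
rewrite mul_malgC malgM_def fgmulgU malgZ_def /fgscale.
by apply: eq_bigr => m _; rewrite mulrC mulm1.
Qed.

Definition hmap (k : fieldType) (F : nat -> freeAlg k) (m : {fmonom nat}) : freeAlg k :=
  \prod_(i <- (m : seq nat)) F i.

Lemma hmap_mm (k : fieldType) (F : nat -> freeAlg k) : mmorphism (hmap F).
Proof.
split; last by rewrite /hmap fm1 big_nil.
by move=> m1 m2; rewrite /hmap fmM big_cat.
Qed.

HB.instance Definition _ (k : fieldType) (F : nat -> freeAlg k) :=
  isMultiplicative.Build {fmonom nat} (freeAlg k) (hmap F) (hmap_mm F).

Definition phi (k : fieldType) (F : nat -> freeAlg k) (p : freeAlg k) : freeAlg k :=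
  mmap (@malgC _ k) (hmap F) p.

Lemma phiM (k : fieldType) (F : nat -> freeAlg k) : multiplicative (phi F).
Proof.
apply: commr_mmap_is_multiplicative => g m m'.
exact: malgC_comm.
Qed.

Lemma phiD (k : fieldType) (F : nat -> freeAlg k) p q : phi F (p + q) = phi F p + phi F q.
Proof. exact: mmapD. Qed.

Lemma phiZ (k : fieldType) (F : nat -> freeAlg k) (a : k) p : phi F (a *: p) = a *: phi F p.
Proof. by rewrite /phi mmapZ /= mul_malgC. Qed.

Lemma phiX (k : fieldType) (F : nat -> freeAlg k) i : phi F (xvar k i) = F i.
Proof. by rewrite /phi /xvar mmapU /= /hmap fmU big_seq1 mpolyC1E mul1r. Qed.
Lemma ew1 : emptyword = (mone : {fmonom nat}).
Proof. by apply: val_inj; rewrite /= fm1. Qed.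

Lemma phi0 (k : fieldType) (F : nat -> freeAlg k) :
  (forall i, in_free0 (F i)) -> forall p, in_free0 p -> in_free0 (phi F p).
Proof.
move=> HF p; rewrite /in_free0 ew1 => hp.
rewrite /phi mmapE raddf_sum /= big1 // => m _.
rewrite mcoeffCM.
have [->|nm] := eqVneq m (mone : {fmonom nat}); first by rewrite hp mul0r.
rewrite /hmap.
rewrite (big_morph (mcoeff (mone : {fmonom nat})) (fst (@mcoeff1g_is_multiplicative _ k)) (snd (@mcoeff1g_is_multiplicative _ k))).
case: m nm => [[|i s]] nm.
  by move: nm; rewrite -ew1 /emptyword eqxx.
by rewrite big_cons -ew1 HF mul0r mulr0.
Qed.
Lemma tele (A : ringType) (u : A) (w : nat -> A) n :
  \sum_(p < n) (\prod_(i < n) (if (i == p :> nat) then w i * u else w i)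
               - \prod_(i < n) (if (i == p :> nat) then u * w i else w i))
  = (\prod_(i < n) w i) * u - u * \prod_(i < n) w i.
Proof.
elim: n => [|n IH]; first by rewrite big_ord0 !big_ord0 mul1r mulr1 subrr.
rewrite big_ord_recr /=.
have E : forall (p : 'I_n) (f g : nat -> A),
  \prod_(i < n.+1) (if (i == p :> nat) then f i else g i)
  = (\prod_(i < n) (if (i == p :> nat) then f i else g i)) * g n.
  move=> p f g; rewrite big_ord_recr /=.
  by rewrite (_ : (n == p) = false) // eq_sym ltn_eqF.
under eq_bigr => p _ do rewrite (E p (fun j => w j * u) w) (E p (fun j => u * w j) w) -mulrBl.
rewrite -mulr_suml IH.
have E2 : forall (f g : nat -> A),
  \prod_(i < n.+1) (if (i == n :> nat) then f i else g i)
  = (\prod_(i < n) g i) * f n.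
  move=> f g; rewrite big_ord_recr /= eqxx; congr (_ * _).
  by apply: eq_bigr => i _; rewrite ltn_eqF.
rewrite (E2 (fun j => w j * u) w) (E2 (fun j => u * w j) w) big_ord_recr /=.
set P := \prod_(i < n) w i.
by rewrite mulrBl !mulrA [LHS]addrC addrA subrK.
Qed.

Lemma phi_endo (k : fieldType) (F : nat -> freeAlg k) :
  (forall i, in_free0 (F i)) -> is_endo0 (phi F).
Proof.
move=> HF; split.
- exact: phi0.
- by move=> a p q _ _; rewrite phiD phiZ.
- by move=> p q _ _; rewrite (fst (phiM F)).
Qed.

Lemma phi_Sd (k : fieldType) (F : nat -> freeAlg k) d :
  phi F (Sd k d) = Spoly (fun i : 'I_d => F i.+1).
Proof.
rewrite /Sd /Spoly (big_morph (phi F) (phiD F) (@mmap0 _ _ _ _ _)).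
apply: eq_bigr => s _.
rewrite (big_morph (phi F) (fst (phiM F)) (snd (phiM F))).
by apply: eq_bigr => i _; rewrite phiX.
Qed.

Lemma R1_phi (k : fieldType) d (F : nat -> freeAlg k) :
  (forall i, in_free0 (F i)) -> @R1 k d (phi F (Sd k d)).
Proof.
move=> HF V [_ _ _ Hend] HS; apply: Hend; first exact: phi_endo.
exact: HS.
Qed.

Lemma R1_lin (k : fieldType) d (a : k) p q :
  @R1 k d p -> @R1 k d q -> @R1 k d (a *: p + q).
Proof.
move=> hp hq V HV HS; have [_ _ Hl _] := HV.
by apply: Hl; [apply: hp | apply: hq].
Qed.

Lemma R1_0 (k : fieldType) d : @R1 k d 0.
Proof. by move=> V [_ H0 _ _]. Qed.

Lemma R1_B (k : fieldType) d p q : @R1 k d p -> @R1 k d q -> @R1 k d (p - q).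
Proof.
move=> hp hq; rewrite addrC -scaleN1r; exact: R1_lin.
Qed.

Lemma R1_D (k : fieldType) d p q : @R1 k d p -> @R1 k d q -> @R1 k d (p + q).
Proof.
move=> hp hq; rewrite -[p]scale1r; exact: R1_lin.
Qed.

Lemma xvar0 (k : fieldType) i : in_free0 (xvar k i).
Proof.
rewrite /in_free0 /xvar mcoeffU.
suff -> : (fmu i == emptyword) = false by [].
by apply/negbTE/negP => /eqP /(congr1 val); rewrite /= fmU.
Qed.

Lemma mul0_l (k : fieldType) (p q : freeAlg k) : in_free0 p -> in_free0 (p * q).
Proof.
rewrite /in_free0 ew1 => hp.
by rewrite (fst (@mcoeff1g_is_multiplicative _ k)) hp mul0r.
Qed.

Lemma mul0_r (k : fieldType) (p q : freeAlg k) : in_free0 q -> in_free0 (p * q).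
Proof.
rewrite /in_free0 ew1 => hp.
by rewrite (fst (@mcoeff1g_is_multiplicative _ k)) hp mulr0.
Qed.

Lemma eq_perm_nat n (s : 'S_n) (i p : 'I_n) :
  ((s i : nat) == s p) = (i == p :> nat).
Proof.
have -> : ((s i : nat) == s p) = (s i == s p) by [].
by rewrite (inj_eq (@perm_inj _ s)).
Qed.

Theorem corollary2p1 (k : fieldType) (d : nat) (hd : (0 < d)%N)
    (u : freeAlg k) (hu : in_free0 u) :
  @R1 k d (comm (Sd k d) u).
Proof.
case: d hd => // d _.
pose Fl (j : 'I_d.+1) := fun n : nat => if n == j.+1 then xvar k n * u else xvar k n.
pose Fr (j : 'I_d.+1) := fun n : nat => if n == j.+1 then u * xvar k n else xvar k n.
have HFl j i : in_free0 (Fl j i).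
  by rewrite /Fl; case: ifP => _; [apply: mul0_l; apply: xvar0 | apply: xvar0].
have HFr j i : in_free0 (Fr j i).
  by rewrite /Fr; case: ifP => _; [apply: mul0_l | apply: xvar0].
have key : comm (Sd k d.+1) u =
   \sum_(j < d.+1) (phi (Fl j) (Sd k d.+1) - phi (Fr j) (Sd k d.+1)).
  rewrite /comm; symmetry.
  under eq_bigr => j0 _ do rewrite !phi_Sd /Spoly -sumrB.
  rewrite exchange_big /=.
  rewrite /Sd /Spoly mulr_suml mulr_sumr -sumrB; apply: eq_bigr => s _.
  rewrite (reindex_inj (@perm_inj _ s)) /=.
  pose w := fun m : nat => xvar k (s (inord m)).+1.
  have Pw : \prod_(i < d.+1) w i = \prod_(i < d.+1) xvar k (s i).+1.
    by apply: eq_bigr => i _; rewrite /w inord_val.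
  rewrite -Pw; rewrite -(tele u w d.+1).
  apply: eq_bigr => p _.
  have E1 : \prod_(i < d.+1) Fl (s p) (s i).+1 = \prod_(i < d.+1) (if (i == p :> nat) then w i * u else w i).
    apply: eq_bigr => i _. rewrite /Fl /w. rewrite inord_val. rewrite eqSS. rewrite eq_perm_nat. by [].
  have E2 : \prod_(i < d.+1) Fr (s p) (s i).+1 = \prod_(i < d.+1) (if (i == p :> nat) then u * w i else w i).
    apply: eq_bigr => i _. rewrite /Fr /w. rewrite inord_val. rewrite eqSS. rewrite eq_perm_nat. by [].
  by rewrite E1 E2.
rewrite key; apply: (big_ind (@R1 k d.+1)).
- exact: R1_0.
- exact: R1_D.
- move=> j _; apply: R1_B; exact: R1_phi.
Qed.
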